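(* Consider a $(1+\varepsilon)$-adversarial sampling process (as in the context) on $k$ elements with $0<\varepsilon<1/2$ and initial weights normalized so that $\sum_{e\in E_0}w_0(e)=k$, against an arbitrary adversary. Then for every $\ell\in\{1,2,\ldots,\lfloor|S_0|/2\rfloor\}$, the probability that $\ell$ is bad is at most $e^{-\ell/40}$.
   Context: The $(1+\varepsilon)$-adversarial sampling process: initially there is a set $E_0$ of $k$ elements with nonnegative weights $w_0$. In round $i$, let $D_i$ be the distribution on $E_i$ with $\Pr_{D_i}(e)=w_i(e)/\sum_{e'\in E_i}w_i(e')$; an adversary chooses any distribution $D_i^\varepsilon$ on $E_i$ with $(1-\varepsilon)\Pr_{D_i}(e)\le\Pr_{D_i^\varepsilon}(e)\le(1+\varepsilon)\Pr_{D_i}(e)$ for all $e$; an element $e_{i+1}$ is sampled from $D_i^\varepsilon$ and $E_{i+1}=E_i\setminus\{e_{i+1}\}$; then the adversary chooses weights $0\le w_{i+1}(e)\le w_i(e)$ for $e\in E_{i+1}$. The adversary is a fixed strategy whose choices may depend on the history; probabilities are over the sampling. Notation: for $E\subseteq E_i$, $w_i(E)=\sum_{e\in E}w_i(e)$. For each $i$, partition $E_i=B_i\sqcup M_i\sqcup S_i$ where $e\in B_i$ iff $w_i(e)\ge 80$, $e\in M_i$ iff $2<w_i(e)<80$, and $e\in S_i$ iff $w_i(e)\le 2$. For $\ell\in\{1,\ldots,|S_0|\}$, $i_\ell$ is the smallest $i$ with $|S_i|=\ell$. An $\ell\in\{1,\ldots,\lfloor|S_0|/2\rfloor\}$ is called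 bad if both $w_{i_{2\ell}}(B_{i_{2\ell}})\le 8\ell$ and $w_{i_\ell}(B_{i_\ell})>4\ell$; otherwise it is good. *)

(* Defs.v *)
From HB Require Import structures.
From mathcomp Require Import all_boot all_order all_algebra.
From mathcomp Require Import all_classical all_reals all_analysis.
Set Implicit Arguments. Unset Strict Implicit. Unset Printing Implicit Defensive.
Import Order.TTheory GRing.Theory Num.Theory.
Local Open Scope ring_scope.

(* A history h : seq 'I_k is the sequence of sampled
   elements e_1, ..., e_i.  The adversary's strategy is given by
   - dist h : the distribution D_i^eps chosen after history h (|h| = i),
   - wt h   : the weights w_i chosen after history h (wt [::] = w_0). *)

Definition remaining k (h : seq 'I_k) : {set 'I_k} := [set e | e \notin h].

Definition totw (R : realType) k (w : 'I_k -> R) (A : {set 'I_k}) : R :=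
  \sum_(e in A) w e.

(* The constraints of the (1+eps)-adversarial sampling process, imposed at
   every (possibly) reachable history h (uniq, fewer than k samples). *)
Definition valid_adversary (R : realType) k (eps : R)
  (dist wt : seq 'I_k -> 'I_k -> R) : Prop :=
  (forall e, 0 <= wt [::] e) /\
  forall h : seq 'I_k, uniq h -> (size h < k)%N ->
    [/\
        (forall e, 0 <= dist h e),
        (forall e, e \in h -> dist h e = 0),
        \sum_e dist h e = 1,
        (* multiplicative closeness to D_i (D_i defined when w_i(E_i) > 0) *)
        (0 < totw (wt h) (remaining h) ->
          forall e, e \notin h ->
            (1 - eps) * (wt h e / totw (wt h) (remaining h)) <= dist h e /\
            dist h e <= (1 + eps) * (wt h e / totw (wt h) (remaining h)))
      &
        (forall e x, e \notin h -> x \notin h -> x != e ->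
           0 <= wt (rcons h e) x /\ wt (rcons h e) x <= wt h x)].

Fixpoint prob_from (R : realType) k (dist : seq 'I_k -> 'I_k -> R)
  (A : seq 'I_k -> bool) (n : nat) (h : seq 'I_k) : R :=
  match n with
  | 0 => (A h)%:R
  | n'.+1 => \sum_e dist h e * prob_from dist A n' (rcons h e)
  end.

Definition prob (R : realType) k (dist : seq 'I_k -> 'I_k -> R)
  (A : seq 'I_k -> bool) : R := prob_from dist A k [::].

(* Along a complete history h, round i has history take i h. *)
Definition Sset (R : realType) k (wt : seq 'I_k -> 'I_k -> R) (h : seq 'I_k)
  (i : nat) : {set 'I_k} :=
  [set e | (e \notin take i h) && (wt (take i h) e <= 2)].

Definition Bset (R : realType) k (wt : seq 'I_k -> 'I_k -> R) (h : seq 'I_k)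
  (i : nat) : {set 'I_k} :=
  [set e | (e \notin take i h) && (80 <= wt (take i h) e)].

Definition first_idx (R : realType) k (wt : seq 'I_k -> 'I_k -> R)
  (h : seq 'I_k) (l : nat) : nat :=
  find (fun i => #|Sset wt h i| == l) (iota 0 k.+1).

Definition wB (R : realType) k (wt : seq 'I_k -> 'I_k -> R) (h : seq 'I_k)
  (i : nat) : R := totw (wt (take i h)) (Bset wt h i).

Definition is_bad (R : realType) k (wt : seq 'I_k -> 'I_k -> R) (l : nat)
  (h : seq 'I_k) : bool :=
  (wB wt h (first_idx wt h (2 * l)) <= 8 * l%:R) &&
  (4 * l%:R < wB wt h (first_idx wt h l)).

(* Main.v *)
Require Import Defs.
From HB Require Import structures.
From mathcomp Require Import all_boot all_order all_algebra.
From mathcomp Require Import all_classical all_reals all_analysis.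
From mathcomp Require Import zify ring lra.
Import Order.TTheory GRing.Theory Num.Theory.
Local Open Scope ring_scope.

Section Proof.
Variables (R : realType) (k : nat) (eps : R) (dist wt : seq 'I_k -> 'I_k -> R).
Hypothesis Hv : valid_adversary eps dist wt.

Lemma wt_ge0 h x : uniq h -> (size h <= k)%N -> x \notin h -> 0 <= wt h x.
Proof.
elim/last_ind: h x => [|h e IH] x; first by case: Hv.
rewrite rcons_uniq size_rcons => /andP[eh uh] sz.
rewrite mem_rcons in_cons negb_or => /andP[xe xh].
have [_ _ _ _ Hw] := Hv.2 h uh sz.
by have [] := Hw e x eh xh xe.
Qed.

Lemma wt_le h e x : uniq (rcons h e) -> (size h < k)%N -> x \notin rcons h e ->
  wt (rcons h e) x <= wt h x.
Proof.
rewrite rcons_uniq => /andP[eh uh] sz.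
rewrite mem_rcons in_cons negb_or => /andP[xe xh].
have [_ _ _ _ Hw] := Hv.2 h uh sz.
by have [] := Hw e x eh xh xe.
Qed.

Definition S0 h := [set x | (x \notin h) && (wt h x <= 2)].
Definition B0 h := [set x | (x \notin h) && (80 <= wt h x)].

Lemma stepS h e : uniq (rcons h e) -> (size h < k)%N ->
  (#|S0 h| <= #|S0 (rcons h e)| + (e \in S0 h))%N.
Proof.
move=> u sz.
rewrite (cardsD1 e (S0 h)) addnC leq_add2r.
apply: subset_leq_card; apply/fintype.subsetP => x.
rewrite !inE => /andP[xe /andP[xh wx]].
have xn : x \notin rcons h e by rewrite mem_rcons in_cons negb_or xe xh.
rewrite xn /=; apply: le_trans wx; exact: wt_le.
Qed.


Lemma take_rcons_le (h : seq 'I_k) e j : (j <= size h)%N -> take j (rcons h e) = take j h.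
Proof. by move=> hj; rewrite -cats1 takel_cat. Qed.

Definition sS h j := #|Sset wt h j|.
Definition fi h m := find (fun j => sS h j == m) (iota 0 (size h).+1).

Lemma sS_rcons h e j : (j <= size h)%N -> sS (rcons h e) j = sS h j.
Proof. by move=> hj; rewrite /sS /Sset take_rcons_le. Qed.

Lemma wB_rcons h e j : (j <= size h)%N -> wB wt (rcons h e) j = wB wt h j.
Proof. by move=> hj; rewrite /wB /Bset take_rcons_le. Qed.

Lemma sS_step h j : uniq h -> (size h <= k)%N -> (j < size h)%N -> (sS h j <= sS h j.+1 + 1)%N.
Proof.
case: h => [|x0 t] // u sz jl.
have := stepS (take j (x0 :: t)) (nth x0 (x0 :: t) j).
rewrite -take_nth // take_uniq // size_take jl => /(_ isT).
have -> : (j < k)%N by apply: leq_trans sz.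
move=> /(_ isT) H; apply: leq_trans H _.
rewrite /sS /Sset (take_nth x0) // leq_add2l; by case: (_ \in _).
Qed.

Lemma disc h m j : uniq h -> (size h <= k)%N -> (j <= size h)%N ->
  (sS h j <= m <= sS h 0)%N -> exists2 j', (j' <= j)%N & sS h j' = m.
Proof.
move=> u sz; elim: j => [|j IH] jl.
  by move=> H; exists 0%N => //; apply/eqP; rewrite eqn_leq.
move=> /andP[H1 H2].
case: (leqP (sS h j) m) => H3.
  have [j' j'l <-] := IH (ltnW jl) (introT andP (conj H3 H2)).
  by exists j' => //; apply: leq_trans j'l _.
exists j.+1 => //.
have := @sS_step h j u sz jl; lia.
Qed.

Lemma fi_le h m j : (j <= size h)%N -> sS h j = m -> (fi h m <= j)%N.
Proof.
move=> jl Hj; rewrite leqNgt; apply/negP => /(before_find 0%N).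
by rewrite nth_iota // add0n Hj eqxx.
Qed.

Lemma fi_size h m : (fi h m <= (size h).+1)%N.
Proof. by have := find_size (fun j => sS h j == m) (iota 0 (size h).+1); rewrite size_iota. Qed.

Lemma fi_rcons h e m : fi (rcons h e) m =
  if (fi h m <= size h)%N then fi h m
  else ((size h).+1 + (sS (rcons h e) (size h).+1 != m))%N.
Proof.
rewrite /fi size_rcons -addn1 iotaD find_cat size_iota has_find size_iota.
have E : find (fun j => sS (rcons h e) j == m) (iota 0 (size h).+1) =
         find (fun j => sS h j == m) (iota 0 (size h).+1).
  apply: eq_in_find => j; rewrite mem_iota add0n ltnS => /andP[_ jl].
  by rewrite sS_rcons.
rewrite E ltnS; case: ifP => // _.
rewrite add0n /=. by case: (_ == m).
Qed.


Lemma e1 : expR (1/10) <= 10/9 :> R.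
Proof.
have h1 := expR_ge1Dx (- (1/10) : R).
have h2 := expRxMexpNx_1 (1/10 : R).
have h3 := expR_gt0 (1/10 : R).
nra.
Qed.

Lemma e2 : expR (-1) <= 1/2 :> R.
Proof.
have h1 := expR_ge1Dx (1 : R).
have h2 := expRxMexpNx_1 (1 : R).
have h3 := expR_gt0 (-1 : R).
nra.
Qed.

Lemma expR_bound X X' c C : X' <= X + c -> expR c <= C -> expR X' <= expR X * C :> R.
Proof.
move=> h1 h2; apply: le_trans (_ : expR (X + c) <= _); first by rewrite ler_expR.
rewrite expRD; apply: ler_wpM2l => //; exact: expR_ge0.
Qed.

Variable l : nat.

Definition F (s : nat) (b : R) : R :=
  if b <= 4 * l%:R then 0
  else expR ((l%:R - (minn s (2 * l))%:R) / 10 + (b - 4 * l%:R) / 80).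

Lemma F_ge0 s b : 0 <= F s b.
Proof. rewrite /F; case: ifP => _ //; exact: expR_ge0. Qed.

Definition coef (inS inB : bool) (s : nat) : R :=
  1 + (if inS && (s <= 2 * l)%N then 1/9 else 0) - (if inB then 1/2 else 0).

Lemma F_step s s' b b' (inS inB : bool) : ~~ (inS && inB) -> b' <= b ->
  (inB -> b' <= b - 80) -> (s <= s' + inS)%N ->
  F s' b' <= F s b * coef inS inB s.
Proof.
move=> nSB hb hB hs; rewrite /F /coef.
case: ifP => hb'.
  apply: mulr_ge0; first by case: ifP => _ //; exact: expR_ge0.
  by case: inS inB nSB {hB hs} => [] [] //= _; try (case: ifP => _); lra.
have hb2 : (b <= 4 * l%:R) = false.
  apply/negP => H; move/negP: hb'; apply; exact: le_trans hb H.
rewrite hb2.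
set m := minn s (2 * l); set m' := minn s' (2 * l).
case: inS inB nSB hB hs => [] [] //= _ hB hs.
- case: (leqP s (2 * l)) => h2 /=.
  + have : (m <= m' + 1)%N by rewrite /m /m'; lia.
    rewrite -(ler_nat R) natrD => hm.
    apply: expR_bound (1/10) _ _ _; first lra.
    have := e1; lra.
  + have : (m <= m')%N by rewrite /m /m'; lia.
    rewrite -(ler_nat R) => hm.
    apply: expR_bound 0 _ _ _; first lra.
    rewrite expR0; lra.
- have : (m <= m')%N by rewrite /m /m'; lia.
  rewrite -(ler_nat R) => hm.
  apply: expR_bound (-1) _ _ _; first by have := hB isT; lra.
  rewrite ?andbF; have := e2; lra.
- have : (m <= m')%N by rewrite /m /m'; lia.
  rewrite -(ler_nat R) => hm.
  apply: expR_bound 0 _ _ _; first lra.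
  rewrite ?andbF expR0; lra.
Qed.

Definition E : R := expR (- (l%:R / 40)).

Lemma F2l b : b <= 8 * l%:R -> F (2 * l) b <= E.
Proof.
move=> hb; rewrite /F /E; case: ifP => _; first exact: expR_ge0.
have := ler0n R l; rewrite ler_expR minnn natrM; lra.
Qed.

Lemma F_l (b : R) : ((nat_of_bool (4 * l%:R < b))%:R : R) <= F l b.
Proof.
rewrite /F; case: ifP => hb; first by rewrite ltNge hb.
rewrite ltNge hb /=.
apply: le_trans (_ : expR 0 <= _); first by rewrite expR0.
rewrite ler_expR.
have -> : minn l (2 * l) = l by lia.
have : ~~ (b <= 4 * l%:R) by rewrite hb.
rewrite -ltNge; lra.
Qed.


Lemma sS_size h : sS h (size h) = #|S0 h|.
Proof. by rewrite /sS /Sset take_size. Qed.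

Lemma wB_size h : wB wt h (size h) = totw (wt h) (B0 h).
Proof. by rewrite /wB /Bset take_size. Qed.

Lemma sS0 h : sS h 0 = #|S0 [::]|.
Proof. by rewrite /sS /Sset take0. Qed.

Lemma stepB h e : uniq (rcons h e) -> (size h < k)%N ->
  totw (wt (rcons h e)) (B0 (rcons h e)) <=
  totw (wt h) (B0 h) - (if e \in B0 h then 80 else 0).
Proof.
move=> u sz.
apply: le_trans (_ : \sum_(x in B0 h :\ e) wt h x <= _).
  rewrite /totw [X in X <= _]big_mkcond [X in _ <= X]big_mkcond /=.
  apply: ler_sum => x _; rewrite !inE.
  case: (boolP (x \in rcons h e)) => xn /=.
    by case: ifP => // /andP[_ /andP[_ H]]; apply: le_trans H.
  have := xn; rewrite mem_rcons in_cons negb_or => /andP[xe xh].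
  have hle := @wt_le h e x u sz xn.
  case: ifP => H1.
    by rewrite xe xh /= (le_trans H1 hle).
  by case: ifP => // /andP[_ /andP[_ H]]; apply: le_trans H.
case: (boolP (e \in B0 h)) => eB.
  rewrite /totw (big_setD1 e eB) /=.
  move: eB; rewrite inE => /andP[_ H]; lra.
have -> : B0 h :\ e = B0 h.
  apply/setP => x; rewrite !inE; case: (eqVneq x e) => [->|] //=.
  by move: eB; rewrite inE => /negPf ->.
by rewrite subr0.
Qed.

Lemma W_ge_b h : uniq h -> (size h <= k)%N ->
  totw (wt h) (B0 h) <= totw (wt h) (remaining h).
Proof.
move=> u sz; rewrite /totw [X in X <= _]big_mkcond [X in _ <= X]big_mkcond /=.
apply: ler_sum => x _; rewrite !inE.
case: (boolP (x \in h)) => xh //=.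
case: ifP => // _; exact: wt_ge0.
Qed.

Lemma all_in (h : seq 'I_k) : uniq h -> size h = k -> forall x, x \in h.
Proof.
move=> u sz x; apply/negPn/negP => xn.
have u' : uniq (x :: h) by rewrite /= xn u.
have := uniq_leq_size u' (fun y _ => mem_enum 'I_k y).
by rewrite size_enum_ord /= sz ltnn.
Qed.

Lemma sS_full h : uniq h -> size h = k -> sS h k = 0%N.
Proof.
move=> u sz; rewrite -{1}sz sS_size; apply/eqP; rewrite cards_eq0; apply/eqP/setP => x.
by rewrite !inE (@all_in h u sz x).
Qed.

Lemma fi_spec h m : (fi h m <= size h)%N -> sS h (fi h m) = m.
Proof.
move=> H.
have Hh : has (fun j => sS h j == m) (iota 0 (size h).+1) by rewrite has_find size_iota ltnS.
have := nth_find 0%N Hh; rewrite nth_iota ?add0n; first by move/eqP.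
by rewrite ltnS.
Qed.


Hypothesis Heps0 : 0 < eps.
Hypothesis Heps : eps < 1 / 2.

Lemma coef_sum h : uniq h -> (size h < k)%N -> 4 * l%:R < totw (wt h) (B0 h) ->
  \sum_e dist h e * coef (e \in S0 h) (e \in B0 h) #|S0 h| <= 1.
Proof.
move=> u sz hb; have He0 := Heps0; have He1 := Heps.
set s := #|S0 h|; set W := totw (wt h) (remaining h); set b := totw (wt h) (B0 h).
have Wb : b <= W by apply: W_ge_b => //; exact: ltnW.
have l0 := ler0n R l.
have hb' : 4 * l%:R < b by [].
have W0 : 0 < W by lra.
have [d0 dh d1 dW _] := Hv.2 h u sz.
have cl := dW W0.
have -> : \sum_e dist h e * coef (e \in S0 h) (e \in B0 h) s =
  \sum_e dist h e + \sum_e (1/9) * (if (e \in S0 h) && (s <= 2 * l)%N then dist h e else 0)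
   - \sum_e (1/2) * (if e \in B0 h then dist h e else 0).
  rewrite -big_split -sumrB; apply: eq_bigr => e _; rewrite /coef.
  case: (_ && _); case: (_ \in B0 h); rewrite /=; ring.
rewrite d1 -!mulr_sumr.
set PS := \sum_e _; set PB := \sum_e (if e \in B0 h then dist h e else 0).
have PB0 : (1 - eps) * (b * W^-1) <= PB.
  rewrite /b /totw mulr_suml mulr_sumr /PB [X in _ <= X](bigID (fun e => e \in B0 h)) /=.
  rewrite [X in _ <= _ + X]big1; last by move=> e /negPf ->.
  rewrite addr0; apply: ler_sum => e eB; rewrite eB.
  have eh : e \notin h by move: eB; rewrite inE => /andP[].
  by have [H _] := cl e eh.
have bW : 4 * l%:R * W^-1 <= b * W^-1.
  by apply: ler_wpM2r; [rewrite invr_ge0; lra | lra].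
have u0 : 0 <= W^-1 by rewrite invr_ge0; lra.
case: (leqP s (2 * l)) => hs.
- idtac.
  have PSb : PS <= s%:R * ((1 + eps) * (2 * W^-1)).
    rewrite /PS (bigID (fun e => e \in S0 h)) /=.
    rewrite [X in _ + X <= _]big1; last by move=> e /negPf ->.
    rewrite addr0.
    apply: (@le_trans _ _ (\sum_(e in S0 h) ((1 + eps) * (2 * W^-1)))); last first.
      by rewrite sumr_const -[_ *+ #|S0 h|]mulr_natl.
    apply: ler_sum => e eS; rewrite eS hs /=.
    have [eh e2] : e \notin h /\ wt h e <= 2 by move: eS; rewrite inE => /andP[].
    have [_ H] := cl e eh; apply: le_trans H _.
    apply: ler_wpM2l; first by apply: addr_ge0 => //; apply: ltW.
    by apply: ler_wpM2r.
  have hs' : s%:R <= (2 * l)%:R :> R by rewrite ler_nat.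
  rewrite natrM in hs'.
  have h1 : s%:R * ((1 + eps) * (2 * W^-1)) <= 2 * l%:R * ((1 + eps) * (2 * W^-1)).
    have p1 : 0 <= 1 + eps :> R by lra.
    have p2 : 0 <= 2 * W^-1 :> R by apply: mulr_ge0.
    by apply: ler_wpM2r => //; apply: mulr_ge0.
  have h2 : (1 - eps) * (4 * l%:R * W^-1) <= (1 - eps) * (b * W^-1).
    have p1 : 0 <= 1 - eps :> R by lra.
    by apply: ler_wpM2l.
  have p3 : 0 <= 1 / 2 - eps :> R by lra.
  have h3 : 0 <= l%:R * W^-1 * (1 / 2 - eps) by apply: mulr_ge0 => //; apply: mulr_ge0.
  nra.
- have -> : PS = 0.
    by rewrite /PS big1 // => e _; rewrite (leqNgt s) hs andbF.
  have p1 : 0 <= 1 - eps :> R by lra.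
  have p2 : 0 <= b :> R by lra.
  have : 0 <= (1 - eps) * (b * W^-1) by apply: mulr_ge0 => //; apply: mulr_ge0.
  lra.
Qed.


Hypothesis Hl : (1 <= l)%N.
Hypothesis Hs0 : (2 * l <= #|S0 [::]|)%N.

Definition Phi h : R :=
  if (size h < fi h (2 * l))%N then E
  else if 8 * l%:R < wB wt h (fi h (2 * l)) then 0
  else if (fi h l <= size h)%N then (nat_of_bool (4 * l%:R < wB wt h (fi h l)))%:R
  else F (sS h (size h)) (wB wt h (size h)).

Lemma base h : uniq h -> size h = k ->
  ((nat_of_bool (is_bad wt l h))%:R : R) <= Phi h.
Proof.
move=> u sz.
have szk : (size h <= k)%N by rewrite sz.
have hk : sS h (size h) = 0%N by rewrite {1}sz (@sS_full h u sz).
have fle m : (m <= 2 * l)%N -> (fi h m <= size h)%N.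
  move=> hm.
  have side : (sS h (size h) <= m <= sS h 0)%N by rewrite hk sS0 /= (leq_trans hm Hs0).
  have [j' j'l hj'] := @disc h m (size h) u szk (leqnn _) side.
  exact: leq_trans (@fi_le h m j' j'l hj') j'l.
have fa := fle _ (leqnn _).
have fc : (fi h l <= size h)%N by apply: fle; lia.
have ea m : first_idx wt h m = fi h m by rewrite /first_idx /fi sz.
rewrite /is_bad /Phi !ea ltnNge fa /= fc.
by case: (leP (wB wt h (fi h (2 * l))) (8 * l%:R)) => H /=.
Qed.


Lemma main n : forall h, uniq h -> (size h + n = k)%N ->
  prob_from dist (is_bad wt l) n h <= Phi h.
Proof.
have Hl1 := Hl.
elim: n => [|n IH] h u sz.
  by rewrite addn0 in sz; exact: base.
have szk : (size h < k)%N by lia.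
have [d0 dh d1 dW _] := Hv.2 h u szk.
rewrite /=.
have uh e : e \notin h -> uniq (rcons h e) by move=> eh; rewrite rcons_uniq eh u.
have step : forall G : 'I_k -> R, (forall e, e \notin h -> Phi (rcons h e) <= G e) ->
    \sum_e dist h e * prob_from dist (is_bad wt l) n (rcons h e) <= \sum_e dist h e * G e.
  move=> G HG; apply: ler_sum => e _; case: (boolP (e \in h)) => eh.
    by rewrite dh // !mul0r.
  apply: ler_wpM2l => //; apply: le_trans (HG e eh).
  by apply: IH; [exact: uh | rewrite size_rcons addSnnS].
have const : forall c : R, \sum_e dist h e * c = c.
  by move=> c; rewrite -mulr_suml d1 mul1r.
have fs m : (fi h m <= (size h).+1)%N := fi_size h m.
rewrite {1}/Phi.
case: ifP => hA.
- have fa : fi h (2 * l) = (size h).+1 by apply/eqP; rewrite eqn_leq fs hA.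
  have fc : fi h l = (size h).+1.
    apply/eqP; rewrite eqn_leq fs /= ltnNge; apply/negP => hc.
    have hcs := @fi_spec h l hc.
    have side : (sS h (fi h l) <= 2 * l <= sS h 0)%N by rewrite hcs sS0 Hs0 andbT; lia.
    have [j' j'l hj'] := @disc h (2 * l) (fi h l) u (ltnW szk) hc side.
    have := @fi_le h (2 * l) j' (leq_trans j'l hc) hj'.
    by rewrite fa => H; have := leq_ltn_trans (leq_trans j'l hc) H; rewrite ltnn.
  apply: le_trans (step (fun _ => E) _) _; last by rewrite const.
  move=> e eh; rewrite /Phi size_rcons !fi_rcons fa fc ltnn /=.
  case: (eqVneq (sS (rcons h e) (size h).+1) (2 * l)) => H /=.
  + rewrite addn0 ltnn; case: ifP => hb; first exact: expR_ge0.
    have -> : (sS (rcons h e) (size h).+1 != l) = true by rewrite H; apply/eqP; lia.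
    rewrite addn1 ltnn H; apply: F2l.
    by rewrite leNgt hb.
  + by rewrite addn1 ltnSn.
- have ha : (fi h (2 * l) <= size h)%N by rewrite leqNgt hA.
  case: ifP => hB.
  + apply: le_trans (step (fun _ => 0) _) _; last by rewrite const.
    move=> e eh; rewrite /Phi size_rcons !fi_rcons ha ltnNge (leqW ha) /=.
    by rewrite (@wB_rcons h e _ ha) hB.
  case: ifP => hC.
  + apply: le_trans (step (fun _ => (nat_of_bool (4 * l%:R < wB wt h (fi h l)))%:R) _) _;
      last by rewrite const.
    move=> e eh; rewrite /Phi size_rcons !fi_rcons ha hC ltnNge (leqW ha) /=.
    by rewrite (@wB_rcons h e _ ha) hB (leqW hC) (@wB_rcons h e _ hC).
  have fc : fi h l = (size h).+1 by apply/eqP; rewrite eqn_leq fs ltnNge hC.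
  rewrite sS_size wB_size.
  set s := #|S0 h|; set b := totw (wt h) (B0 h).
  apply: le_trans (step (fun e => F s b * coef (e \in S0 h) (e \in B0 h) s) _) _.
    move=> e eh.
    have E1 : sS (rcons h e) (size h).+1 = #|S0 (rcons h e)| by rewrite -(size_rcons h e) sS_size.
    have E2 : wB wt (rcons h e) (size h).+1 = totw (wt (rcons h e)) (B0 (rcons h e))
      by rewrite -(size_rcons h e) wB_size.
    have Phi_le : Phi (rcons h e) <= F #|S0 (rcons h e)| (totw (wt (rcons h e)) (B0 (rcons h e))).
      rewrite /Phi size_rcons !fi_rcons ha hC ltnNge (leqW ha) /= (@wB_rcons h e _ ha) hB.
      case: (eqVneq (sS (rcons h e) (size h).+1) l) => H /=.
      * by rewrite addn0 leqnn -E1 H -E2; exact: F_l.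
      * by rewrite addn1 ltnn E1 E2.
    apply: le_trans Phi_le _.
    have hsB := @stepB h e (uh e eh) szk.
    apply: F_step.
    * rewrite !inE; apply/negP => /andP[/andP[_ h1] /andP[_ h2]].
      have := le_trans h2 h1; lra.
    * by move: hsB; rewrite /b; case: ifP => _; lra.
    * by move=> eB; move: hsB; rewrite /b eB.
    * exact: (@stepS h e (uh e eh) szk).
  under eq_bigr do rewrite mulrCA.
  rewrite -mulr_sumr.
  case: (leP b (4 * l%:R)) => hb.
    by rewrite /F hb !mul0r.
  have := @coef_sum h u szk hb; have := F_ge0 s b; nra.
Qed.


Lemma final : prob dist (is_bad wt l) <= E.
Proof.
have Hl1 := Hl.
apply: le_trans (@main k [::] isT (add0n k)) _.
rewrite /Phi /=.
case: ifP => h0; first by [].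
have fa : fi [::] (2 * l) = 0%N by move/negbT: h0; rewrite lt0n negbK => /eqP.
have sa := @fi_spec [::] (2 * l) (eq_leq fa).
rewrite fa in sa.
rewrite fa; case: ifP => hb; first exact: expR_ge0.
case: ifP => hc.
  have := @fi_spec [::] l hc.
  have -> : fi [::] l = 0%N by move: hc; rewrite leqn0 => /eqP.
  rewrite sa; lia.
rewrite sa; apply: F2l; by rewrite leNgt hb.
Qed.

End Proof.

Theorem lemma4 (R : realType) (k : nat) (eps : R)
  (dist wt : seq 'I_k -> 'I_k -> R) :
  0 < eps -> eps < 1 / 2 ->
  valid_adversary eps dist wt ->
  \sum_e wt [::] e = k%:R ->
  forall l : nat, (1 <= l)%N -> (l <= #|Sset wt [::] 0| %/ 2)%N ->
    prob dist (is_bad wt l) <= expR (- (l%:R / 40)).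
Proof.
move=> He0 He1 Hv _ l Hl Hs.
have Hs0 : (2 * l <= #|@S0 R k wt [::]|)%N.
  have -> : #|@S0 R k wt [::]| = #|Sset wt [::] 0| by [].
  lia.
exact: (@final R k eps dist wt Hv l He0 He1 Hl Hs0).
Qed.
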